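(* Let $n_d\ge 1$, let $S_1,\dots,S_{n_d}>0$, $\overline{P_0}\ge 0$ and $\theta_0\in[0,\pi/2)$. For $S>0$ define $\mathcal{X}(S,\overline{P_0},\theta_0)=\{(P,Q)\in\mathbb{R}^2: 0\le P\le S\overline{P_0},\ Q^2\le S^2-P^2,\ |Q|\le\tan(\theta_0)P\}$. Then $$\bigoplus_{i=1}^{n_d}\mathcal{X}(S_i,\overline{P_0},\theta_0)=\mathcal{X}\Big(\sum_{i=1}^{n_d}S_i,\overline{P_0},\theta_0\Big).$$
   Context: $\oplus$ denotes the Minkowski sum $A\oplus B=\{a+b: a\in A, b\in B\}$. The set $\mathcal{X}(S,\overline{P},\theta)$ is the feasible real/reactive power set of a photovoltaic inverter with apparent power rating $S$, normalized available real power $\overline{P}$, and minimum power factor $\cos\theta$. *)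

(* Defs.v *)
From Stdlib Require Import Reals.
Open Scope R_scope.

Definition set2 := (R * R)%type -> Prop.

Definition Xset (S Pbar theta : R) : set2 :=
  fun z => let (P, Q) := z in
    0 <= P /\ P <= S * Pbar /\ Q ^ 2 <= S ^ 2 - P ^ 2 /\ Rabs Q <= tan theta * P.

Definition msum (A B : set2) : set2 :=
  fun z => exists a b, A a /\ B b /\ z = (fst a + fst b, snd a + snd b).

Fixpoint bigmsum (n : nat) (F : nat -> set2) : set2 :=
  match n with
  | O => fun z => z = (0, 0)
  | S k => msum (bigmsum k F) (F k)
  end.

Fixpoint rsum (n : nat) (f : nat -> R) : R :=
  match n with
  | O => 0
  | S k => rsum k f + f k
  end.

(* Main.v *)
Require Import Defs.
From Stdlib Require Import Reals Lra Psatz.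
Open Scope R_scope.

Lemma scale_X (S Pb th c P Q : R) : 0 <= c ->
  Xset S Pb th (P, Q) -> Xset (c * S) Pb th (c * P, c * Q).
Proof.
  intros Hc [H1 [H2 [H3 H4]]]. repeat split.
  - nra.
  - assert (c * P <= c * (S * Pb)) by (apply Rmult_le_compat_l; lra). nra.
  - assert (c^2 * Q^2 <= c^2 * (S^2 - P^2)) by (apply Rmult_le_compat_l; nra). nra.
  - rewrite Rabs_mult, (Rabs_right c) by lra.
    assert (c * Rabs Q <= c * (tan th * P)) by (apply Rmult_le_compat_l; lra). nra.
Qed.

Lemma msum_X (a b Pb th : R) : 0 <= a -> 0 < b -> forall z,
  msum (Xset a Pb th) (Xset b Pb th) z <-> Xset (a + b) Pb th z.
Proof.
  intros Ha Hb z. split.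
  - intros [[P1 Q1] [[P2 Q2] [[A1 [A2 [A3 A4]]] [[B1 [B2 [B3 B4]]] ->]]]].
    simpl. repeat split.
    + lra.
    + lra.
    + assert (Hcs : (P1*P2+Q1*Q2)^2 <= (P1^2+Q1^2)*(P2^2+Q2^2))
        by (pose proof (pow2_ge_0 (P1*Q2 - P2*Q1)); nra).
      assert (Hm : (P1^2+Q1^2)*(P2^2+Q2^2) <= a^2 * b^2).
      { apply Rmult_le_compat; nra. }
      assert (P1*P2+Q1*Q2 <= a*b).
      { destruct (Rle_or_lt (P1*P2+Q1*Q2) 0). nra.
        apply Rsqr_incr_0_var. unfold Rsqr. nra. nra. }
      nra.
    + eapply Rle_trans. apply Rabs_triang. lra.
  - destruct z as [P Q]. intros HX.
    set (s := a + b).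
    assert (Hs : 0 < s) by (unfold s; lra).
    exists ((a/s) * P, (a/s) * Q), ((b/s) * P, (b/s) * Q).
    split; [|split].
    + replace a with ((a/s) * s) at 1 by (field; lra).
      apply scale_X; auto. unfold Rdiv; apply Rmult_le_pos; [lra | left; apply Rinv_0_lt_compat; lra].
    + replace b with ((b/s) * s) at 1 by (field; lra).
      apply scale_X; auto. unfold Rdiv; apply Rmult_le_pos; [lra | left; apply Rinv_0_lt_compat; lra].
    + simpl. unfold s. f_equal; field; lra.
Qed.

Lemma rsum_nonneg n S : (forall i, (i < n)%nat -> 0 < S i) -> 0 <= rsum n S.
Proof.
  induction n; simpl; intros H. lra.
  assert (0 < S n) by (apply H; auto).
  assert (0 <= rsum n S) by (apply IHn; intros; apply H; auto). lra.
Qed.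

Lemma gen (nd : nat) (S : nat -> R) (Pbar0 theta0 : R) :
  (forall i, (i < nd)%nat -> 0 < S i) ->
  forall z : R * R,
    bigmsum nd (fun i => Xset (S i) Pbar0 theta0) z <->
    Xset (rsum nd S) Pbar0 theta0 z.
Proof.
  induction nd; intros HS z.
  - simpl. destruct z as [P Q]. split.
    + intros H. injection H as -> ->. repeat split; try lra.
      rewrite Rabs_R0. lra.
    + intros [H1 [H2 [H3 H4]]]. assert (P = 0) by lra. subst.
      assert (Q = 0) by nra. subst. reflexivity.
  - simpl. assert (HS' : forall i, (i < nd)%nat -> 0 < S i) by (intros; apply HS; auto).
    rewrite <- msum_X; [| apply rsum_nonneg; auto | apply HS; auto].
    unfold msum. split; intros [a [b [Ha [Hb E]]]]; exists a, b;
      (split; [apply IHnd; auto | split; auto]).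
Qed.

(* Indices are shifted: S_1..S_{n_d} are S 0 .. S (nd-1). *)
Theorem corollary1 (nd : nat) (S : nat -> R) (Pbar0 theta0 : R) :
  (1 <= nd)%nat ->
  (forall i, (i < nd)%nat -> 0 < S i) ->
  0 <= Pbar0 ->
  0 <= theta0 < PI / 2 ->
  forall z : R * R,
    bigmsum nd (fun i => Xset (S i) Pbar0 theta0) z <->
    Xset (rsum nd S) Pbar0 theta0 z.
Proof.
  intros _ HS _ _. apply gen; auto.
Qed.
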